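(* There exist a finite set $\mathcal{P}$ of points in the Euclidean plane $\mathbb{R}^2$ and an edge price $\alpha>0$ such that the greedy-routing network creation game on $\mathcal{P}$ (with Euclidean distances) and edge price $\alpha$ has no Greedy Equilibrium, and hence no Nash equilibrium.
   Context: Game on a finite metric space $(\mathcal{P},d)$ with edge price $\alpha>0$: agents are the points of $\mathcal{P}$; agent $u$'s strategy is $S_u\subseteq\mathcal{P}\setminus\{u\}$; a profile $\mathbf{s}$ defines the directed network with arcs $(u,v)$, $v\in S_u$, of length $d(u,v)$. A greedy path from $u$ to $v$ is a directed path $u=x_1,\dots,x_j=v$ of arcs with $d(x_i,v)>d(x_{i+1},v)$ for all $i$. $\mathrm{stretch}(u,v)$ is the minimum length of a greedy path from $u$ to $v$ divided by $d(u,v)$, or a fixed sufficiently large penalty constant $Z$ if none exists. Cost: $c_u(\mathbf{s})=\sum_{v\ne u}\mathrm{stretch}(u,v)+\alpha|S_u|$. A Greedy Equilibrium is a profile in which no agent can strictly decrease its cost by adding one element to, deleting one element from, or swapping one element of its strategy (others fixed). A Nash equilibrium is a profile in which no agent can strictly decrease its cost by any change of its own strategy. *)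

(* Defs.v *)
From mathcomp Require Import all_boot all_order all_algebra.
From mathcomp Require Import boolp classical_sets reals Rstruct.
Set Implicit Arguments. Unset Strict Implicit. Unset Printing Implicit Defensive.
Import Order.TTheory GRing.Theory Num.Theory.
Local Open Scope ring_scope.

Notation RR := Rdefinitions.R (only parsing).

Definition euclid (p q : RR * RR) : RR :=
  Num.sqrt ((p.1 - q.1) ^+ 2 + (p.2 - q.2) ^+ 2).

Section Game.
(* Agents are the n points of P, indexed by 'I_n; pos gives their coordinates
   (pos is required injective in the theorem so that P has n distinct points). *)
Variables (n : nat) (pos : 'I_n -> RR * RR) (alpha Z : RR).

Definition d (u v : 'I_n) : RR := euclid (pos u) (pos v).

Definition profile := 'I_n -> {set 'I_n}.

(* Strategies must satisfy S_u \subseteq P \ {u}. *)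
Definition valid_strategy (u : 'I_n) (S : {set 'I_n}) : Prop := u \notin S.
Definition valid_profile (s : profile) : Prop := forall u, valid_strategy u (s u).

(* The directed path u = x_1, x :: p (x_2 .. x_j), is a greedy path from u to v
   in the network of s: every step is an arc (x_i, x_{i+1}) with
   x_{i+1} \in S_{x_i} and d(x_i, v) > d(x_{i+1}, v), and it ends at v. *)
Definition greedy_path (s : profile) (u v : 'I_n) (p : seq 'I_n) : Prop :=
  path (fun a b => (b \in s a) && (d b v < d a v)) u p /\ last u p = v.

Definition path_length (u : 'I_n) (p : seq 'I_n) : RR :=
  \sum_(e <- zip (u :: p) p) d e.1 e.2.

(* The minimum over the
   (finite, nonempty) set of greedy path lengths is its infimum. *)
Definition stretch (s : profile) (u v : 'I_n) : RR :=
  if `[< exists p, greedy_path s u v p >] then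
    inf [set path_length u p | p in [set p | greedy_path s u v p]] / d u v
  else Z.

Definition cost (s : profile) (u : 'I_n) : RR :=
  \sum_(v | v != u) stretch s u v + alpha * (#|s u|)%:R.

Definition update (s : profile) (u : 'I_n) (S : {set 'I_n}) : profile :=
  fun x => if x == u then S else s x.

Definition single_change (S S' : {set 'I_n}) : Prop :=
  (exists w, w \notin S /\ S' = w |: S) \/
  (exists w, w \in S /\ S' = S :\ w) \/
  (exists w w', [/\ w \in S, w' \notin S & S' = w' |: (S :\ w)]).

Definition greedy_equilibrium (s : profile) : Prop :=
  forall u S', valid_strategy u S' -> single_change (s u) S' ->
    cost s u <= cost (update s u S') u.

Definition nash_equilibrium (s : profile) : Prop :=
  forall u S', valid_strategy u S' -> cost s u <= cost (update s u S') u.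

End Game.

(* Main.v *)
Require Import Defs.
From Stdlib Require Import QArith Qreals Reals.
Close Scope Q_scope. Close Scope R_scope.
From mathcomp Require Import all_boot all_order all_algebra.
From mathcomp Require Import boolp classical_sets reals Rstruct.
From mathcomp Require Import ring lra.
Import Order.TTheory GRing.Theory Num.Theory.



Definition xs : seq nat := [:: 27; 9; 20; 2; 15].
Definition ys : seq nat := [:: 12; 8; 19; 27; 5].
Definition sqT : seq (seq nat) := [:: [:: 0; 340; 98; 850; 193]; [:: 340; 0; 242; 410; 45]; [:: 98; 242; 0; 388; 221]; [:: 850; 410; 388; 0; 653]; [:: 193; 45; 221; 653; 0]].
Definition sqn (i j : nat) : nat := nth 0 (nth [::] sqT i) j.
Definition sqf (i j : nat) : nat :=
  let a := nth 0 xs i in let b := nth 0 xs j in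
  let c := nth 0 ys i in let e := nth 0 ys j in
  addn (addn (muln (subn a b) (subn a b)) (muln (subn b a) (subn b a)))
       (addn (muln (subn c e) (subn c e)) (muln (subn e c) (subn e c))).

Open Scope Z_scope.
Definition dloZ : seq (seq Z) := [:: [:: 0; 18439088; 9899494; 29154759; 13892443]; [:: 18439088; 0; 15556349; 20248456; 6708203]; [:: 9899494; 15556349; 0; 19697715; 14866068]; [:: 29154759; 20248456; 19697715; 0; 25553864]; [:: 13892443; 6708203; 14866068; 25553864; 0]].
Definition dhiZ : seq (seq Z) := [:: [:: 0; 18439089; 9899495; 29154760; 13892444]; [:: 18439089; 0; 15556350; 20248457; 6708204]; [:: 9899495; 15556350; 0; 19697716; 14866069]; [:: 29154760; 20248457; 19697716; 0; 25553865]; [:: 13892444; 6708204; 14866069; 25553865; 0]].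

Close Scope Z_scope.
Definition q0 : Q := Qmake Z0 1%positive.
Definition qZ (z : Z) : Q := Qmake z 1%positive.
Definition qlo (i j : nat) : Q := Qmake (nth Z0 (nth [::] dloZ i) j) 1000000%positive.
Definition qhi (i j : nat) : Q := Qmake (nth Z0 (nth [::] dhiZ i) j) 1000000%positive.
Definition qle (a b : Q) : bool := Qle_bool a b.
Definition qlt (a b : Q) : bool := ~~ Qle_bool b a.
Definition qmin (a b : Q) : Q := if qle a b then a else b.
Definition qN (n : nat) : Q := Qmake (Z.of_nat n) 1%positive.

Definition bounds_ok : bool :=
  all (fun i => all (fun j =>
    [&& qle q0 (qlo i j), qle q0 (qhi i j),
        qle (Qmult (qlo i j) (qlo i j)) (qN (sqn i j)),
        qle (qN (sqn i j)) (Qmult (qhi i j) (qhi i j)),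
        qle (qhi i j) (qZ 30) &
        (i == j) || qle (qZ 6) (qlo i j)]) (iota 0 5)) (iota 0 5).

Definition adj (rows : seq (seq bool)) (a b : nat) : bool := nth false (nth [::] rows a) b.
Definition arc (A : nat -> nat -> bool) (v x y : nat) : bool := if A x y then sqn y v < sqn x v else false.

Definition bigQ : Q := qZ 100000.
Definition relax (D : nat -> nat -> Q) (A : nat -> nat -> bool) (v : nat) (f : seq Q) : seq Q :=
  [seq (if x == v then q0 else
        foldr (fun y acc => if arc A v x y then qmin acc (Qplus (D x y) (nth q0 f y)) else acc)
          bigQ (iota 0 5)) | x <- iota 0 5].
Definition dp D A v : seq Q := ssrnat.iter 5 (relax D A v) (nseq 5 bigQ).

Definition potok (A : nat -> nat -> bool) (v : nat) (f : seq Q) : bool :=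
  qle (nth q0 f v) q0 &&
  all (fun x => qle q0 (nth q0 f x) &&
        all (fun y => arc A v x y ==> qle (nth q0 f x) (Qplus (qlo x y) (nth q0 f y))) (iota 0 5))
    (iota 0 5).

Definition nexthop D A v (g : seq Q) (x : nat) : option nat :=
  foldr (fun y acc => if arc A v x y then
     match acc with None => Some y
     | Some z => if qle (Qplus (D x z) (nth q0 g z)) (Qplus (D x y) (nth q0 g y)) then Some z else Some y end
     else acc) None (iota 0 5).
Fixpoint extract D A v g (fuel x : nat) : seq nat :=
  match fuel with 0 => [::] | k.+1 =>
    if x == v then [::] else
    match nexthop D A v g x with Some y => y :: extract D A v g k y | None => [::] end end.
Definition pathb (A : nat -> nat -> bool) (v x : nat) (p : seq nat) : bool :=
  [&& path (arc A v) x p, last x p == v & all (fun y => y < 5) p].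
Fixpoint qlen (x : nat) (p : seq nat) : Q :=
  match p with [::] => q0 | y :: p' => Qplus (qhi x y) (qlen y p') end.

Definition ubpath (A : nat -> nat -> bool) (u v : nat) : seq nat :=
  extract qhi A v (dp qhi A v) 5 u.
Definition ubok A u v := pathb A v u (ubpath A u v).
Definition ubval A u v := Qdiv (qlen u (ubpath A u v)) (qlo u v).
Definition lbf A v := dp qlo A v.
Definition lbok A u v := potok A v (lbf A v) && qle (Qdiv (nth q0 (lbf A v) u) (qhi u v)) (qZ 500).
Definition lbval A u v := Qdiv (nth q0 (lbf A v) u) (qhi u v).

Definition swaprow (r : seq bool) (w w' : nat) : seq bool :=
  [seq (if i == w' then true else if i == w then false else nth false r i) | i <- iota 0 5].

Definition qsum (F : nat -> Q) (u : nat) : Q :=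
  foldr (fun v acc => if v != u then Qplus (F v) acc else acc) q0 (iota 0 5).

Definition improves (rows : seq (seq bool)) (u w w' : nat) : bool :=
  let r := nth [::] rows u in
  let rows' := set_nth [::] rows u (swaprow r w w') in
  if [&& u < 5, w < 5, w' < 5, nth false r w, ~~ nth false r w' & w' != u] then
  if all (fun v => if v == u then true else if ubok (adj rows') u v then lbok (adj rows) u v else false) (iota 0 5) then
      qlt (qsum (ubval (adj rows') u) u) (qsum (lbval (adj rows) u) u) else false else false.

Fixpoint lhas (a : nat -> bool) (s : seq nat) : bool :=
  match s with [::] => false | x :: s' => if a x then true else lhas a s' end.
Definition goodcombo rows : bool :=
  lhas (fun u => lhas (fun w => lhas (fun w' => improves rows u w w') (iota 0 5)) (iota 0 5)) (iota 0 5).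
Definition sq_ok : bool := all (fun i => all (fun j => sqn i j == sqf i j) (iota 0 5)) (iota 0 5).

Definition covb (x : nat) (r : seq bool) : bool :=
  all (fun v => (v == x) || has (fun y => nth false r y && (sqn y v < sqn x v)) (iota 0 5)) (iota 0 5).
Definition mincov (x : nat) (r : seq bool) : bool :=
  [&& ~~ nth false r x, covb x r &
     all (fun w => nth false r w ==> ~~ covb x (set_nth false r w false)) (iota 0 5)].
Fixpoint allrows (n : nat) : seq (seq bool) :=
  match n with 0 => [:: [::]] | k.+1 => [seq b :: r | b <- [:: true; false], r <- allrows k] end.
Definition cand (x : nat) := [seq r <- allrows 5 | mincov x r].

Definition final_ok : bool :=
  all (fun r0 => all (fun r1 => all (fun r2 => all (fun r3 => all (fun r4 =>
     goodcombo [:: r0; r1; r2; r3; r4]) (cand 4)) (cand 3)) (cand 2)) (cand 1)) (cand 0).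

Lemma final_ok_true : final_ok = true. Proof. exact (eq_refl true <: final_ok = true). Qed.
Lemma bounds_ok_true : bounds_ok = true. Proof. exact (eq_refl true <: bounds_ok = true). Qed.
Lemma sq_ok_true : sq_ok = true. Proof. exact (eq_refl true <: sq_ok = true). Qed.


Local Open Scope ring_scope.

Definition posR (i : 'I_5) : RR * RR := ((nth 0%N xs i)%:R, (nth 0%N ys i)%:R).
Notation dd := (d posR).

Lemma sqdiff (a b : nat) : ((a%:R - b%:R) ^+ 2 : RR) = (subn a b * subn a b + subn b a * subn b a)%N%:R.
Proof.
case: (leqP a b) => h.
  have -> : subn a b = 0%N by apply/eqP; rewrite subn_eq0.
  rewrite mul0n add0n natrM natrB // -sqrrN opprB; by rewrite expr2.
have -> : subn b a = 0%N by apply/eqP; rewrite subn_eq0 ltnW.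
rewrite addn0 natrM natrB ?(ltnW h) //; by rewrite expr2.
Qed.

Lemma ord_iota (u : 'I_5) : (val u \in iota 0 5).
Proof. by rewrite mem_iota /= ltn_ord. Qed.

Lemma dd_sqrt (u v : 'I_5) : dd u v = Num.sqrt ((sqn u v)%:R).
Proof.
have /allP/(_ _ (ord_iota u))/allP/(_ _ (ord_iota v))/eqP -> := sq_ok_true.
by rewrite /d /euclid /posR /= !sqdiff -natrD.
Qed.

Lemma dd_ge0 u v : 0 <= dd u v.
Proof. rewrite dd_sqrt; exact: sqrtr_ge0. Qed.

Lemma dd_lt (a b v : 'I_5) : (dd a v < dd b v) = (sqn a v < sqn b v)%N.
Proof.
rewrite !dd_sqrt; case: (posnP (sqn b v)) => [->|h].
  rewrite ltn0; apply/negbTE; rewrite -leNgt.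
  rewrite (_ : (0%:R : RR) = 0) // sqrtr0; exact: sqrtr_ge0.
by rewrite ltr_sqrt ?ltr0n // ltr_nat.
Qed.

Lemma Q2R_le {a b : Q} : qle a b -> Q2R a <= Q2R b.
Proof. by move=> /Qle_bool_iff /Qle_Rle /RleP. Qed.

Lemma Q2R_lt {a b : Q} : qlt a b -> Q2R a < Q2R b.
Proof.
rewrite /qlt => /negP h; apply/RltP; apply: Qlt_Rlt.
by apply: Qnot_le_lt => /Qle_bool_iff.
Qed.

Lemma Q2R_qN n : Q2R (qN n) = n%:R.
Proof. by rewrite /Q2R /qN /= Rinv_1 Rmult_1_r -INR_IZR_INZ INRE. Qed.

Lemma Q2R_qZ z : Q2R (qZ z) = IZR z.
Proof. by rewrite /Q2R /qZ /= Rinv_1 Rmult_1_r. Qed.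

Lemma Q2R_q0 : Q2R q0 = 0.
Proof. by rewrite /Q2R /q0 /= Rmult_0_l. Qed.

Lemma bnd (u v : 'I_5) :
  [/\ 0 <= Q2R (qlo u v), Q2R (qlo u v) <= dd u v, dd u v <= Q2R (qhi u v),
      Q2R (qhi u v) <= 30 & u != v -> 6 <= Q2R (qlo u v)].
Proof.
have /allP/(_ _ (ord_iota u))/allP/(_ _ (ord_iota v)) := bounds_ok_true.
case/and5P => h0 hh h1 h2 /andP[h3 h4].
have l0 := Q2R_le h0; rewrite Q2R_q0 in l0.
have lh := Q2R_le h3; rewrite Q2R_qZ in lh.
have hi0 := Q2R_le hh; rewrite Q2R_q0 in hi0.
split => //.
- rewrite dd_sqrt -(ger0_norm l0) -sqrtr_sqr; apply: ler_wsqrtr.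
  by have := Q2R_le h1; rewrite Q2R_mult Q2R_qN RmultE expr2.
- rewrite dd_sqrt -(ger0_norm hi0) -sqrtr_sqr; apply: ler_wsqrtr.
  by have := Q2R_le h2; rewrite Q2R_mult Q2R_qN RmultE expr2.
- by move: lh; rewrite (_ : IZR 30 = 30%:R) // -INRE INR_IZR_INZ.
- move=> uv; move: h4; rewrite (negbTE (_ : val u != val v)) //=.
  by move=> /Q2R_le; rewrite Q2R_qZ (_ : IZR 6 = 6%:R) // -INRE INR_IZR_INZ.
Qed.

Local Open Scope ring_scope.

Lemma pl_nil x : path_length posR x [::] = 0.
Proof. by rewrite /path_length big_nil. Qed.
Lemma pl_cons x y p : path_length posR x (y :: p) = dd x y + path_length posR y p.
Proof. by rewrite /path_length /= big_cons. Qed.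
Lemma pl_ge0 x p : 0 <= path_length posR x p.
Proof.
elim: p x => [|y p IH] x; first by rewrite pl_nil.
by rewrite pl_cons addr_ge0 // dd_ge0.
Qed.
Lemma pl_bound x p : path_length posR x p <= (size p)%:R * 30.
Proof.
elim: p x => [|y p IH] x; first by rewrite pl_nil mul0r.
rewrite pl_cons /=.
have -> : ((size p).+1%:R : RR) = (size p)%:R + 1 by rewrite natr1.
have := IH y; case: (bnd x y) => _ _ h1 h2 _; lra.
Qed.

Lemma gp_nil {s x v} : greedy_path posR s x v [::] <-> x = v.
Proof. by rewrite /greedy_path /=; split => [[]|->]. Qed.
Lemma gp_cons {s x v y p} : greedy_path posR s x v (y :: p) <->
  [/\ y \in s x, dd y v < dd x v & greedy_path posR s y v p].
Proof.
rewrite /greedy_path /=; split.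
  by case=> /andP[/andP[h1 h2] h3] h4.
by case=> h1 h2 [h3 h4]; rewrite h1 h2 h3.
Qed.

Lemma gp_size {s x v p} : greedy_path posR s x v p -> (size p <= 4)%N.
Proof.
case=> hp _.
have hs : sorted (fun a b => dd b v < dd a v) (x :: p).
  by apply: sub_path hp => a b /andP[].
have hu : uniq (x :: p).
  apply: sorted_uniq hs.
    by move=> a b c h1 h2; apply: lt_trans h2 h1.
  by move=> a; rewrite ltxx.
have := uniq_leq_size hu (fun z _ => mem_enum 'I_5 z).
by rewrite size_enum_ord.
Qed.

Lemma pl_le120 {s x v p} : greedy_path posR s x v p -> path_length posR x p <= 120.
Proof.
move=> /gp_size h; apply: le_trans (pl_bound x p) _.
have : ((size p)%:R : RR) <= 4%:R by rewrite ler_nat.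
by lra.
Qed.

Definition GS (s : profile 5) (u v : 'I_5) : set RR :=
  image (mkset (fun p : seq 'I_5 => greedy_path posR s u v p)) (fun p => path_length posR u p).

Lemma GS_lb s u v : lbound (GS s u v) 0.
Proof. by move=> _ [p _ <-]; apply: pl_ge0. Qed.

Lemma st_path s Z u v : (exists p, greedy_path posR s u v p) ->
  stretch posR Z s u v = inf (GS s u v) / dd u v.
Proof. by rewrite /stretch; case: asboolP. Qed.

Lemma st_nopath s Z u v : ~ (exists p, greedy_path posR s u v p) -> stretch posR Z s u v = Z.
Proof. by rewrite /stretch; case: asboolP. Qed.

Lemma dd_pos {u v : 'I_5} : u != v -> 0 < dd u v.
Proof. by move=> h; case: (bnd u v) => h0 h1 _ _ /(_ h) h6; lra. Qed.

Lemma st_ub s Z u v p : u != v -> greedy_path posR s u v p ->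
  stretch posR Z s u v <= path_length posR u p / dd u v.
Proof.
move=> uv hp; rewrite st_path; last by exists p.
apply: ler_wpM2r; first by rewrite invr_ge0 dd_ge0.
apply: ge_inf; first by exists 0; apply: GS_lb.
by exists p.
Qed.

Lemma st_le20 s Z u v p : u != v -> greedy_path posR s u v p -> stretch posR Z s u v <= 20.
Proof.
move=> uv hp; apply: le_trans (st_ub s Z u v p uv hp) _.
have h120 := pl_le120 hp.
have hd := dd_pos uv; case: (bnd u v) => _ h1 _ _ /(_ uv) h6.
rewrite ler_pdivrMr //; lra.
Qed.

Lemma st_ge0 s Z u v : 0 <= Z -> 0 <= stretch posR Z s u v.
Proof.
move=> hZ; case: (pselect (exists p, greedy_path posR s u v p)) => h.
  rewrite st_path // mulr_ge0 ?invr_ge0 ?dd_ge0 //.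
  apply: lb_le_inf; last exact: GS_lb.
  by case: h => p hp; exists (path_length posR u p); exists p.
by rewrite st_nopath.
Qed.

Lemma st_lb s Z u v (c e : RR) : u != v ->
  (forall p, greedy_path posR s u v p -> c <= path_length posR u p) ->
  0 <= c -> dd u v <= e -> c / e <= Z -> c / e <= stretch posR Z s u v.
Proof.
move=> uv hc c0 de cZ.
have dp := dd_pos uv.
case: (pselect (exists p, greedy_path posR s u v p)) => h; last by rewrite st_nopath.
rewrite st_path //.
apply: (@le_trans _ _ (c / dd u v)).
  apply: ler_wpM2l => //; rewrite lef_pV2 ?posrE //; lra.
apply: ler_wpM2r; first by rewrite invr_ge0 dd_ge0.
apply: lb_le_inf.
  by case: h => p hp; exists (path_length posR u p); exists p.
by move=> _ [p hp <-]; apply: hc.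
Qed.

Lemma gp_sub (s s' : profile 5) x v p : (forall y, s y \subset s' y) ->
  greedy_path posR s x v p -> greedy_path posR s' x v p.
Proof.
move=> hs [hp hl]; split => //; apply: sub_path hp => a b /andP[h1 h2].
by rewrite h2 andbT (fintype.subsetP (hs a)).
Qed.

Lemma st_mono (s s' : profile 5) Z u v : (forall y, s y \subset s' y) -> 20 <= Z -> u != v ->
  stretch posR Z s' u v <= stretch posR Z s u v.
Proof.
move=> hs hZ uv.
case: (pselect (exists p, greedy_path posR s u v p)) => h.
  have h' : exists p, greedy_path posR s' u v p.
    by case: h => p hp; exists p; apply: gp_sub hp.
  rewrite !st_path //; apply: ler_wpM2r; first by rewrite invr_ge0 dd_ge0.
  apply: lb_le_inf.
    by case: h => p hp; exists (path_length posR u p); exists p.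
  move=> _ [p hp <-]; apply: ge_inf; first by exists 0; apply: GS_lb.
  by exists p => //; apply: gp_sub hp.
rewrite (st_nopath s Z u v h).
case: (pselect (exists p, greedy_path posR s' u v p)) => h'.
  by case: h' => p hp; apply: le_trans (st_le20 s' Z u v p uv hp) hZ.
by rewrite st_nopath.
Qed.

Local Open Scope ring_scope.

Lemma dd_refl (v : 'I_5) : dd v v = 0.
Proof.
rewrite /d /euclid !subrr expr2 mul0r addr0.
by rewrite sqrtr0.
Qed.

Lemma gp_single (s : profile 5) u v : u != v -> v \in s u -> greedy_path posR s u v [:: v].
Proof.
move=> uv hv; apply/gp_cons; split => //.
by rewrite dd_refl dd_pos.
Qed.

Lemma gp_update (s : profile 5) u S x v q : greedy_path posR s x v q -> dd x v < dd u v ->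
  greedy_path posR (update s u S) x v q.
Proof.
elim: q x => [|y q IH] x.
  by move=> /gp_nil -> _; apply/gp_nil.
move=> /gp_cons [h1 h2 h3] hx.
have xu : x != u by apply/eqP => e; move: hx; rewrite e ltxx.
apply/gp_cons; split => //; first by rewrite /update (negbTE xu).
by apply: IH h3 (lt_trans h2 hx).
Qed.

Lemma sum_le100 (F : 'I_5 -> RR) (u : 'I_5) : (forall v, v != u -> F v <= 20) ->
  \sum_(v | v != u) F v <= 100.
Proof.
move=> hF; rewrite big_mkcond /=.
apply: (@le_trans _ _ (\sum_(v < 5) (20%:R : RR))).
  apply: ler_sum => v _; case: ifP => h; [exact: hF | by []].
by rewrite big_const_ord /=; lra.
Qed.

Lemma sumD1 {F : 'I_5 -> RR} {u v : 'I_5} : v != u ->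
  \sum_(i | i != u) F i = F v + \sum_(i | (i != u) && (i != v)) F i.
Proof. by move=> h; rewrite (bigD1 v). Qed.

Lemma reach {s : profile 5} {Z} : valid_profile s -> greedy_equilibrium posR 200%:R Z s -> 500 <= Z ->
  forall u v, u != v -> exists p, greedy_path posR s u v p.
Proof.
move=> hv hge hZ u v uv; apply: contrapT => hno.
have vnot : v \notin s u.
  by apply/negP => hvin; apply: hno; exists [:: v]; apply: gp_single.
set S' := v |: s u.
have hval : valid_strategy u S'.
  by rewrite /valid_strategy /S' in_setU1 negb_or uv hv.
have hsc : single_change (s u) S' by left; exists v.
have := hge u S' hval hsc; rewrite /cost.
have vu : v != u by rewrite eq_sym.
rewrite (sumD1 vu) (sumD1 vu).
have e1 : update s u S' u = S' by rewrite /update eqxx.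
rewrite e1 /S' cardsU1 vnot natrD.
rewrite (st_nopath s Z u v hno).
have h20 : stretch posR Z (update s u S') u v <= 20.
  apply: (st_le20 _ Z u v [:: v] uv); apply: gp_single => //.
  by rewrite e1 /S' setU11.
move=> h; rewrite -/S' (_ : (true%:R : RR) = 1) // in h; move: h.
match goal with |- is_true (_ + ?B + _ <= _ + ?A + _) -> False =>
  have hsum : A <= B end.
  apply: ler_sum => i /andP[iu _]; apply: st_mono; last by rewrite eq_sym.
    move=> y; rewrite /update; case: ifP => [/eqP ->|_]; [exact: finset.subsetUr | exact: fintype.subxx].
  lra.
move=> h; lra.
Qed.

Lemma cover {s : profile 5} {Z} : valid_profile s -> greedy_equilibrium posR 200%:R Z s -> 500 <= Z ->
  forall u v, u != v -> exists y, y \in s u /\ dd y v < dd u v.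
Proof.
move=> hv hge hZ u v uv; have [[|y p] hp] := reach hv hge hZ u v uv.
  by move/gp_nil: hp => e; move: uv; rewrite e eqxx.
by case/gp_cons: hp => h1 h2 _; exists y.
Qed.

Lemma minimal {s : profile 5} {Z} : valid_profile s -> greedy_equilibrium posR 200%:R Z s -> 500 <= Z ->
  forall u w, w \in s u -> exists v, v != u /\ forall y, y \in s u -> y != w -> ~~ (dd y v < dd u v).
Proof.
move=> hv hge hZ u w hw; apply: contrapT => hno.
have hcov : forall v, v != u -> exists y, [/\ y \in s u, y != w & dd y v < dd u v].
  move=> v vu; apply: contrapT => hy; apply: hno; exists v; split => // y hy1 hy2.
  by apply/negP => hlt; apply: hy; exists y.
set S' := s u :\ w.
have hval : valid_strategy u S'.
  by rewrite /valid_strategy /S' in_setD1 negb_and hv orbT.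
have hsc : single_change (s u) S' by right; left; exists w.
have := hge u S' hval hsc; rewrite /cost.
have e1 : update s u S' u = S' by rewrite /update eqxx.
rewrite e1 [#|s u|](cardsD1 w) hw natrD.
have h100 : \sum_(v | v != u) stretch posR Z (update s u S') u v <= 100.
  apply: sum_le100 => v vu.
  have uv : u != v by rewrite eq_sym.
  have [y [hy1 hy2 hy3]] := hcov v vu.
  have [q hq] : exists q, greedy_path posR s y v q.
    case: (eqVneq y v) => [->|yv]; first by exists [::]; apply/gp_nil.
    exact: reach hv hge hZ _ _ yv.
  apply: (st_le20 _ Z u v (y :: q) uv); apply/gp_cons; split => //.
    by rewrite e1 /S' in_setD1 hy2 hy1.
  exact: gp_update hq hy3.
have h0 : 0 <= \sum_(v | v != u) stretch posR Z s u v.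
  by apply: sumr_ge0 => v _; apply: st_ge0; lra.
move=> h; rewrite -/S' (_ : (true%:R : RR) = 1) // in h; lra.
Qed.

Local Open Scope ring_scope.

Definition rowsOf (s : profile 5) : seq (seq bool) :=
  mkseq (fun i => mkseq (fun j => (inord j : 'I_5) \in s (inord i)) 5) 5.

Lemma adj_rowsOf s (x y : 'I_5) : adj (rowsOf s) x y = (y \in s x).
Proof. by rewrite /adj /rowsOf nth_mkseq ?ltn_ord // nth_mkseq ?ltn_ord // !inord_val. Qed.

Lemma size_rowsOf s (x : 'I_5) : size (nth [::] (rowsOf s) x) = 5%N.
Proof. by rewrite /rowsOf nth_mkseq ?ltn_ord // size_mkseq. Qed.

Lemma mincov_rows {s : profile 5} {Z} : valid_profile s -> greedy_equilibrium posR 200%:R Z s -> 500 <= Z ->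
  forall x : 'I_5, mincov x (nth [::] (rowsOf s) x).
Proof.
move=> hv hge hZ x.
have hr : forall (y : nat) (hy : (y < 5)%N), nth false (nth [::] (rowsOf s) x) y = (Ordinal hy \in s x).
  by move=> y hy; exact: (adj_rowsOf s x (Ordinal hy)).
apply/and3P; split.
- by rewrite (hr _ (ltn_ord x)) /=; have := hv x; rewrite /valid_strategy (_ : Ordinal _ = x) //; apply: val_inj.
- apply/allP => v; rewrite mem_iota => /andP[_ hv5].
  case: (eqVneq v (val x)) => [->|vx]; first by apply/orP; left.
  have xv : x != Ordinal hv5 by apply/eqP => e; move: vx; rewrite e eqxx.
  have [y [hy1 hy2]] := cover hv hge hZ x (Ordinal hv5) xv.
  apply/orP; right; apply/hasP; exists (val y); first exact: ord_iota.
  rewrite (hr _ (ltn_ord y)) (_ : Ordinal _ = y); last by apply: val_inj.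
  by rewrite hy1 /=; move: hy2; rewrite dd_lt.
- apply/allP => w; rewrite mem_iota => /andP[_ hw5]; apply/implyP.
  rewrite (hr _ hw5) => hw.
  have [v [vx hv']] := minimal hv hge hZ x (Ordinal hw5) hw.
  apply/negP => /allP /(_ (val v) (ord_iota v)) /orP [/eqP vx'|/hasP [y hy /andP [h1 h2]]].
    by move: vx; rewrite (_ : v = x) ?eqxx //; apply: val_inj.
  move: hy; rewrite mem_iota => /andP[_ hy5].
  move: h1; rewrite nth_set_nth /=; case: eqVneq => // yw; rewrite (hr _ hy5) => hy1.
  have hne : Ordinal hy5 != Ordinal hw5.
    by apply/eqP => -[e]; move: yw; rewrite e eqxx.
  by move: (hv' _ hy1 hne); rewrite dd_lt /= h2.
Qed.

Lemma allrows_mem n (r : seq bool) : size r = n -> r \in allrows n.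
Proof.
elim: n r => [|n IH] [|b r] // [hs].
apply: (@allpairs_f _ _ _ (fun b r => b :: r)); last exact: IH.
by case: b.
Qed.

Lemma rows_cand {s : profile 5} {Z} : valid_profile s -> greedy_equilibrium posR 200%:R Z s -> 500 <= Z ->
  forall x : 'I_5, nth [::] (rowsOf s) x \in cand x.
Proof.
move=> hv hge hZ x; rewrite /cand mem_filter (mincov_rows hv hge hZ) andTb.
by apply: allrows_mem; rewrite size_rowsOf.
Qed.

Lemma lhasP (a : nat -> bool) l : lhas a l -> exists2 x, x \in l & a x.
Proof.
elim: l => [|y l IH] //=; case: ifP => h.
  by move=> _; exists y; rewrite ?mem_head.
by move/IH => [x hx hax]; exists x; rewrite // in_cons hx orbT.
Qed.

Local Open Scope ring_scope.

Lemma path_conv {s : profile 5} {A : nat -> nat -> bool}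
  (Hadj : forall x y : 'I_5, A x y = (y \in s x)) {v : 'I_5} :
  forall p (x : 'I_5), path (arc A v) x p -> last (nat_of_ord x) p == nat_of_ord v -> all (fun y => (y < 5)%N) p ->
  greedy_path posR s x v (map (@inord 4) p) /\ path_length posR x (map (@inord 4) p) <= Q2R (qlen x p).
Proof.
elim => [|y p IH] x /=.
  move=> _ /eqP e _; have -> : x = v by apply: val_inj.
  by split; [apply/gp_nil | rewrite pl_nil Q2R_q0].
move=> /andP[hxy hp] hl /andP[hy5 hall].
have ey : nat_of_ord (@inord 4 y) = y by rewrite inordK.
have := IH (inord y); rewrite ey => /(_ hp hl hall) [g1 g2].
have hA : A x y = (inord y \in s x) by rewrite -Hadj ey.
have hd : (dd (inord y) v < dd x v) = (sqn y v < sqn x v)%N by rewrite dd_lt ey.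
move: hxy; rewrite /arc hA; case: ifP => // hin hlt.
split; first by apply/gp_cons; split => //; rewrite hd.
rewrite pl_cons Q2R_plus RplusE; case: (bnd x (inord y)) => _ _ h _ _.
by rewrite ey in h; lra.
Qed.

Lemma Qnz {u v : 'I_5} {q : Q} : u != v -> (Q2R q = Q2R (qlo u v) \/ Q2R q = Q2R (qhi u v)) -> ~ Qeq q q0.
Proof.
move=> uv hq /Qeq_eqR; rewrite Q2R_q0 => e.
case: (bnd u v) => h0 h1 h2 h3 /(_ uv) h6.
by case: hq => e'; rewrite e' in e; lra.
Qed.

Lemma ub_sound (s : profile 5) Z (A : nat -> nat -> bool) (Hadj : forall x y : 'I_5, A x y = (y \in s x)) (u v : 'I_5) :
  u != v -> ubok A u v -> stretch posR Z s u v <= Q2R (ubval A u v).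
Proof.
move=> uv /and3P [hp hl ha].
have [g1 g2] := path_conv Hadj _ _ hp hl ha.
apply: le_trans (st_ub _ Z _ _ _ uv g1) _.
rewrite /ubval Q2R_div; last by apply: (Qnz uv); left.
rewrite RdivE.
case: (bnd u v) => h0 h1 h2 h3 /(_ uv) h6.
have hpl := pl_ge0 u (map (@inord 4) (ubpath A u v)).
apply: (@le_trans _ _ (Q2R (qlen u (ubpath A u v)) / dd u v)).
  by apply: ler_wpM2r => //; rewrite invr_ge0 dd_ge0.
apply: ler_wpM2l; first lra.
rewrite lef_pV2 ?posrE //; lra.
Qed.

Lemma pot_sound (s : profile 5) (A : nat -> nat -> bool) (Hadj : forall x y : 'I_5, A x y = (y \in s x)) (v : 'I_5) (f : seq Q) :
  potok A v f -> forall p (x : 'I_5), greedy_path posR s x v p -> Q2R (nth q0 f x) <= path_length posR x p.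
Proof.
move=> /andP[hv hall].
elim => [|y p IH] x.
  by move/gp_nil => ->; rewrite pl_nil; move: (Q2R_le hv); rewrite Q2R_q0.
move/gp_cons => [h1 h2 h3].
have := allP hall _ (ord_iota x) => /andP[_ /allP /(_ _ (ord_iota y))].
rewrite /arc Hadj h1 -dd_lt h2 /= => /Q2R_le; rewrite Q2R_plus RplusE => h.
have := IH y h3; rewrite pl_cons; case: (bnd x y) => _ hl _ _ _; lra.
Qed.

Lemma lb_sound (s : profile 5) Z (A : nat -> nat -> bool) (Hadj : forall x y : 'I_5, A x y = (y \in s x)) (u v : 'I_5) :
  u != v -> 500 <= Z -> lbok A u v -> Q2R (lbval A u v) <= stretch posR Z s u v.
Proof.
move=> uv hZ /andP[hpot hb].
have hc0 : 0 <= Q2R (nth q0 (lbf A v) u).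
  by move: hpot => /andP[_ /allP /(_ _ (ord_iota u)) /andP[/Q2R_le]]; rewrite Q2R_q0.
have e : Q2R (lbval A u v) = Q2R (nth q0 (lbf A v) u) / Q2R (qhi u v).
  by rewrite /lbval Q2R_div ?RdivE //; apply: (Qnz uv); right.
rewrite e; apply: st_lb => //.
- by move=> p hp; exact: (@pot_sound s A Hadj v _ hpot p u hp).
- by case: (bnd u v).
- rewrite -e; apply: le_trans (Q2R_le hb) _; rewrite Q2R_qZ.
  by rewrite (_ : IZR 500 = 500%:R) // -INRE INR_IZR_INZ.
Qed.

Lemma qsum_R (F : nat -> Q) (u : 'I_5) : Q2R (qsum F u) = \sum_(v | v != u) Q2R (F (val v)).
Proof.
rewrite (eq_bigl (fun v : 'I_5 => val v != val u)) //.
rewrite -(big_mkord (fun i => i != val u) (fun i => Q2R (F i))).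
rewrite /qsum /index_iota subn0.
elim: (iota 0 5) => [|y l IH] /=; first by rewrite big_nil Q2R_q0.
rewrite big_cons; case: ifP => _ //; by rewrite Q2R_plus IH.
Qed.

Local Open Scope ring_scope.

Lemma nth_swaprow r w w' i : (i < 5)%N ->
  nth false (swaprow r w w') i = if i == w' then true else if i == w then false else nth false r i.
Proof. by move=> hi; rewrite /swaprow (nth_map 0%N) ?size_iota // nth_iota. Qed.

Lemma improves_sound (s : profile 5) Z (hv : valid_profile s) (hZ : 500 <= Z) rows
  (Hadj : forall x y : 'I_5, adj rows x y = (y \in s x)) u w w' :
  improves rows u w w' -> ~ greedy_equilibrium posR 200%:R Z s.
Proof.
rewrite /improves; case: ifP => //; case/and5P => hu hw hw' hr /andP[hr' hu'].
case: ifP => // hall hlt hge.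
set uo := Ordinal hu; set wo := Ordinal hw; set w'o := Ordinal hw'.
set r := nth [::] rows u.
set r' := swaprow r w w'.
set rows' := set_nth [::] rows u r'.
set S' := finset (fun y : 'I_5 => nth false r' y).
have inS : forall y : 'I_5, (y \in S') = nth false r' y by move=> y; rewrite finset.in_set.
have Hadj' : forall x y : 'I_5, adj rows' x y = (y \in update s uo S' x).
  move=> x y; rewrite /adj /rows' nth_set_nth /= /update.
  case: (eqVneq x uo) => [->|hx]; first by rewrite eqxx inS.
  have -> : (nat_of_ord x == u) = false.
    by apply/negbTE; apply: contra hx => /eqP e; apply/eqP; apply: val_inj.
  exact: Hadj x y.
have hval : valid_strategy uo S'.
  rewrite /valid_strategy inS nth_swaprow // (negbTE (_ : u != w')); last by rewrite eq_sym.
  case: ifP => // _; have := hv uo; rewrite /valid_strategy -Hadj.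
  by apply.
have ew : wo \in s uo by rewrite -Hadj.
have ew' : w'o \notin s uo by rewrite -Hadj.
have eS : S' = w'o |: (s uo :\ wo).
  apply/finset.setP => y; rewrite inS nth_swaprow ?ltn_ord // in_setU1 in_setD1 -Hadj.
  have e1 : (y == w'o) = (nat_of_ord y == w') by [].
  have e2 : (y == wo) = (nat_of_ord y == w) by [].
  by rewrite e1 e2; case: (_ == w'); case: (_ == w).
have hsc : single_change (s uo) S'.
  by right; right; exists wo, w'o; split.
have := hge uo S' hval hsc; rewrite /cost.
have ecard : #|update s uo S' uo| = #|s uo|.
  rewrite /update eqxx eS cardsU1 [#|s uo|](cardsD1 wo) ew in_setD1 (negbTE ew') andbF.
  by rewrite add1n.
rewrite ecard.
have hub : \sum_(v | v != uo) stretch posR Z (update s uo S') uo v <=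
           \sum_(v | v != uo) Q2R (ubval (adj rows') u (val v)).
  apply: ler_sum => v vu.
  have := allP hall _ (ord_iota v); rewrite (negbTE (_ : nat_of_ord v != u)); last first.
    by apply: contra vu => /eqP e; apply/eqP; apply: val_inj.
  case: ifP => // hub _.
  by apply: (ub_sound _ Z _ Hadj' uo v); rewrite // eq_sym.
have hlb : \sum_(v | v != uo) Q2R (lbval (adj rows) u (val v)) <=
           \sum_(v | v != uo) stretch posR Z s uo v.
  apply: ler_sum => v vu.
  have := allP hall _ (ord_iota v); rewrite (negbTE (_ : nat_of_ord v != u)); last first.
    by apply: contra vu => /eqP e; apply/eqP; apply: val_inj.
  case: ifP => // hu1 hl1.
  by apply: (lb_sound _ Z _ Hadj uo v); rewrite // eq_sym.
have hq : \sum_(v | v != uo) Q2R (ubval (adj rows') u (val v)) <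
          \sum_(v | v != uo) Q2R (lbval (adj rows) u (val v)).
  by rewrite -!qsum_R; exact: Q2R_lt hlt.
rewrite lerD2r => h.
have := lt_le_trans (le_lt_trans hub (lt_le_trans hq hlb)) h.
by rewrite ltxx.
Qed.

Lemma xy_inj : all (fun i => all (fun j =>
  ((nth 0%N xs i == nth 0%N xs j) && (nth 0%N ys i == nth 0%N ys j)) ==> (i == j)) (iota 0 5)) (iota 0 5).
Proof. by []. Qed.

Theorem theorem4p1 :
  exists (n : nat) (pos : 'I_n -> RR * RR), injective pos /\
  exists alpha : RR, 0 < alpha /\
  exists Z0 : RR, forall Z : RR, Z0 <= Z ->
    (forall s : profile n, valid_profile s ->
       ~ greedy_equilibrium pos alpha Z s) /\
    (forall s : profile n, valid_profile s ->
       ~ nash_equilibrium pos alpha Z s).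
Proof.
exists 5%N, posR; split.
  move=> i j [hx hy]; apply: val_inj => /=.
  move/eqP: hx; rewrite eqr_nat => hx; move/eqP: hy; rewrite eqr_nat => hy.
  by have := allP (allP xy_inj _ (ord_iota i)) _ (ord_iota j); rewrite hx hy => /eqP.
exists 200%:R; split; first by rewrite ltr0n.
exists 500 => Z hZ.
have nge : forall s : profile 5, valid_profile s -> ~ greedy_equilibrium posR 200%:R Z s.
  move=> s hv hge.
  have hc := rows_cand hv hge hZ.
  have hgood : goodcombo (rowsOf s).
    move: final_ok_true => /allP /(_ _ (hc (@Ordinal 5 0 isT))) /allP /(_ _ (hc (@Ordinal 5 1 isT)))
      /allP /(_ _ (hc (@Ordinal 5 2 isT))) /allP /(_ _ (hc (@Ordinal 5 3 isT)))
      /allP /(_ _ (hc (@Ordinal 5 4 isT))).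
    by [].
  move: hgood; rewrite /goodcombo => /lhasP [u _ /lhasP [w _ /lhasP [w' _ himp]]].
  exact: (improves_sound _ _ hv hZ _ (adj_rowsOf s) _ _ _ himp hge).
split => s hv; first exact: nge.
move=> hne; apply: (nge s hv) => u S' hval _; exact: hne.
Qed.
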